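(* For every integer $i > 0$, the limits defining $d_0(W,\sigma^iW)$ and $d(W,\sigma^iW)$ exist, and $$d_0(W,\sigma^i W) > \frac16 \qquad\text{and}\qquad d(W,\sigma^i W) > \frac29.$$
   Context: Words are finite strings over $\{0,1\}$; $\alpha(i)$ is the $i$-th letter and $|\alpha|$ the length. Define $W_0 = 0$, $W_{m+1} = W_m W_m 1 W_m$, and let $W=W(0)W(1)\cdots$ (indexed from $0$) be the unique infinite word having every $W_m$ as an initial segment. For words $\alpha,\beta$ of equal length, $d(\alpha,\beta) = |\{i:\alpha(i)\ne\beta(i)\}|/|\alpha|$, and (if $\alpha$ contains a $0$) $d_0(\alpha,\beta) = |\{i : \alpha(i)=0,\ \beta(i)=1\}|/|\{i:\alpha(i)=0\}|$. For $i>0$ and $n\ge0$ let $\alpha_n$ be the subword of $W$ of length $|W_n|$ starting at position $i$, and set $d(W,\sigma^iW) = \lim_{n\to\infty} d(W_n,\alpha_n)$ and $d_0(W,\sigma^iW) = \lim_{n\to\infty} d_0(W_n,\alpha_n)$. *)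

(* Defs.v *)
(* limits are real-valued (Un_cv). Letters: false = 0, true = 1. *)
From Stdlib Require Import Reals List Arith.
Import ListNotations.
Open Scope R_scope.

Fixpoint Wm (m : nat) : list bool :=
  match m with
  | O => [false]
  | S m' => Wm m' ++ Wm m' ++ [true] ++ Wm m'
  end.

Definition is_W (w : nat -> bool) : Prop :=
  forall m k, (k < length (Wm m))%nat -> w k = nth k (Wm m) false.

Definition mismatches (w : nat -> bool) (i n : nat) : nat :=
  length (filter (fun k => negb (Bool.eqb (nth k (Wm n) false) (w (i + k)%nat)))
                 (seq 0 (length (Wm n)))).

Definition zero_one (w : nat -> bool) (i n : nat) : nat :=
  length (filter (fun k => andb (negb (nth k (Wm n) false)) (w (i + k)%nat))
                 (seq 0 (length (Wm n)))).

Definition zeros (n : nat) : nat :=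
  length (filter (fun k => negb (nth k (Wm n) false)) (seq 0 (length (Wm n)))).

Definition d_n (w : nat -> bool) (i n : nat) : R :=
  INR (mismatches w i n) / INR (length (Wm n)).
Definition d0_n (w : nat -> bool) (i n : nat) : R :=
  INR (zero_one w i n) / INR (zeros n).

(* Main.v *)
Require Import Defs.
From Stdlib Require Import Reals List Arith Lia Lra Bool.
From Coquelicot Require Import Coquelicot.
Import ListNotations.
Open Scope R_scope.

Module Comb.
Local Open Scope nat_scope.
Local Open Scope bool_scope.


Definition cntp (p : nat -> bool) (n : nat) : nat := length (filter p (seq 0 n)).

Lemma cntp_S p n : cntp p (S n) = cntp p n + (if p n then 1 else 0).
Proof.
  unfold cntp. rewrite seq_S, filter_app, length_app. simpl.
  destruct (p n); simpl; lia.
Qed.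

Lemma cntp_0 p : cntp p 0 = 0.
Proof. reflexivity. Qed.

Lemma cntp_ext p q n : (forall k, k < n -> p k = q k) -> cntp p n = cntp q n.
Proof.
  induction n; intros H; [reflexivity|].
  rewrite !cntp_S, IHn by (intros; apply H; lia). rewrite H by lia. reflexivity.
Qed.

Lemma cntp_add p a b : cntp p (a + b) = cntp p a + cntp (fun k => p (a + k)) b.
Proof.
  induction b.
  - rewrite Nat.add_0_r, cntp_0. lia.
  - rewrite Nat.add_succ_r, !cntp_S, IHb. lia.
Qed.

Lemma cntp_le p n : cntp p n <= n.
Proof. induction n; [reflexivity|rewrite cntp_S; destruct (p n); lia]. Qed.

Definition V (B Y : list bool) (s : nat) : nat :=
  cntp (fun y => negb (nth y B false) && nth (y + s) Y false) (length B).

Lemma V_app B1 B2 Y s : V (B1 ++ B2) Y s = V B1 Y s + V B2 Y (length B1 + s).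
Proof.
  unfold V. rewrite length_app, cntp_add. f_equal.
  - apply cntp_ext. intros k Hk. rewrite app_nth1 by lia. reflexivity.
  - apply cntp_ext. intros k Hk. rewrite app_nth2 by lia.
    replace (length B1 + k - length B1) with k by lia.
    replace (length B1 + k + s) with (k + (length B1 + s)) by lia. reflexivity.
Qed.

Lemma V_strip B U Y s : length U <= s -> V B (U ++ Y) s = V B Y (s - length U).
Proof.
  intros H. unfold V. apply cntp_ext. intros k Hk.
  rewrite app_nth2 by lia. f_equal. f_equal. lia.
Qed.

Lemma V_prefix B Y Z s : length B + s <= length Y -> V B (Y ++ Z) s = V B Y s.
Proof.
  intros H. unfold V. apply cntp_ext. intros k Hk.
  rewrite app_nth1 by lia. reflexivity.
Qed.

Lemma V_true Y s : V [true] Y s = 0.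
Proof. reflexivity. Qed.

Definition Ln n := length (Wm n).

Lemma Ln_S n : Ln (S n) = 3 * Ln n + 1.
Proof. unfold Ln. simpl. rewrite !length_app. simpl. lia. Qed.

Lemma Ln_0 : Ln 0 = 1.
Proof. reflexivity. Qed.

Lemma Ln_ge n : n + 1 <= Ln n.
Proof. induction n; [rewrite Ln_0; lia | rewrite Ln_S; lia]. Qed.

Lemma Ln_pow n : 2 * Ln n + 1 = 3 ^ (S n).
Proof. induction n; [reflexivity|]. rewrite Ln_S. simpl in *. lia. Qed.

Lemma W_last n : nth (Ln n - 1) (Wm n) false = false.
Proof.
  induction n; [reflexivity|].
  unfold Ln in *. simpl. rewrite !length_app. simpl.
  rewrite app_nth2 by lia. rewrite app_nth2 by lia. simpl.
  replace (length (Wm n) + (length (Wm n) + S (length (Wm n))) - 1 - length (Wm n) - length (Wm n))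
    with (S (length (Wm n) - 1)) by (pose proof (Ln_ge n); unfold Ln in *; lia).
  exact IHn.
Qed.

Lemma W_first n : nth 0 (Wm n) false = false.
Proof.
  induction n; [reflexivity|]. simpl. rewrite app_nth1; [exact IHn|].
  pose proof (Ln_ge n); unfold Ln in *; lia.
Qed.


Definition a n s := V (Wm n) (Wm n ++ Wm n ++ [true]) s.
Definition b n s := V (Wm n) (Wm n ++ [true] ++ Wm n) s.

Lemma R_a n Z s : s <= Ln n + 1 -> V (Wm n) (Wm n ++ Wm n ++ true :: Z) s = a n s.
Proof.
  intros H. unfold a.
  replace (Wm n ++ Wm n ++ true :: Z) with ((Wm n ++ Wm n ++ [true]) ++ Z)
    by (rewrite <- !app_assoc; reflexivity).
  apply V_prefix. rewrite !length_app. unfold Ln in *. simpl. lia.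
Qed.

Lemma R_b n Z s : s <= Ln n + 1 -> V (Wm n) (Wm n ++ true :: Wm n ++ Z) s = b n s.
Proof.
  intros H. unfold b.
  replace (Wm n ++ true :: Wm n ++ Z) with ((Wm n ++ [true] ++ Wm n) ++ Z)
    by (rewrite <- !app_assoc; reflexivity).
  apply V_prefix. rewrite !length_app. unfold Ln in *. simpl. lia.
Qed.

Lemma R_bb n Z s : s <= Ln n -> V (Wm n) (Wm n ++ Wm n ++ Wm n ++ Z) s = a n s.
Proof.
  intros H. unfold a.
  replace (Wm n ++ Wm n ++ Wm n ++ Z) with ((Wm n ++ Wm n) ++ (Wm n ++ Z))
    by (rewrite <- !app_assoc; reflexivity).
  replace (Wm n ++ Wm n ++ [true]) with ((Wm n ++ Wm n) ++ [true])
    by (rewrite <- !app_assoc; reflexivity).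
  rewrite (V_prefix _ (Wm n ++ Wm n) (Wm n ++ Z)), (V_prefix _ (Wm n ++ Wm n) [true]); try reflexivity; rewrite ?length_app; unfold Ln in *; lia.
Qed.

Lemma R_bb_top n Z : V (Wm n) (Wm n ++ Wm n ++ Wm n ++ Z) (Ln n + 1) + 1 = a n (Ln n + 1).
Proof.
  unfold a, V. pose proof (Ln_ge n) as HL. pose proof (W_last n) as Hl.
  pose proof (W_first n) as Hf. unfold Ln in *.
  destruct (length (Wm n)) as [|L] eqn:HeL; [lia|].
  replace (S L - 1) with L in Hl by lia.
  rewrite !cntp_S.
  rewrite (cntp_ext _ (fun y => negb (nth y (Wm n) false) &&
        nth (y + (S L + 1)) (Wm n ++ Wm n ++ [true]) false)).
  2:{ intros k Hk. f_equal.
      replace (Wm n ++ Wm n ++ Wm n ++ Z) with ((Wm n ++ Wm n) ++ (Wm n ++ Z))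
        by (rewrite <- !app_assoc; reflexivity).
      replace (Wm n ++ Wm n ++ [true]) with ((Wm n ++ Wm n) ++ [true])
        by (rewrite <- !app_assoc; reflexivity).
      rewrite (app_nth1 (Wm n ++ Wm n) (Wm n ++ Z)), (app_nth1 (Wm n ++ Wm n) [true]);
        try reflexivity; rewrite length_app; lia. }
  rewrite Hl. simpl negb. cbv iota beta.
  assert (E1 : nth (L + (S L + 1)) (Wm n ++ Wm n ++ Wm n ++ Z) false = false).
  { rewrite app_nth2 by lia. rewrite app_nth2 by lia. rewrite HeL.
    replace (L + (S L + 1) - S L - S L) with 0 by lia.
    rewrite app_nth1 by lia. exact Hf. }
  assert (E2 : nth (L + (S L + 1)) (Wm n ++ Wm n ++ [true]) false = true).
  { rewrite app_nth2 by lia. rewrite app_nth2 by lia. rewrite HeL.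
    replace (L + (S L + 1) - S L - S L) with 0 by lia. reflexivity. }
  rewrite E1, E2. simpl. lia.
Qed.

Lemma V_sB n Y k : Ln n <= k -> V (Wm n) (Wm n ++ Y) k = V (Wm n) Y (k - Ln n).
Proof. intros H. apply V_strip. exact H. Qed.

Lemma V_s1 B Y k : 1 <= k -> V B (true :: Y) k = V B Y (k - 1).
Proof. intros H. apply (V_strip B [true] Y k). simpl; lia. Qed.

Ltac redV1 := first
  [ (rewrite R_a by lia; f_equal; lia)
  | (rewrite R_b by lia; f_equal; lia)
  | (rewrite R_bb by lia; f_equal; lia)
  | (rewrite V_sB by lia)
  | (rewrite V_s1 by lia) ].
Ltac redV := repeat redV1.

Lemma split_S n X s : V (Wm (S n)) X s =
  V (Wm n) X s + V (Wm n) X (Ln n + s) + V (Wm n) X (S (Ln n + (Ln n + s))).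
Proof.
  change (Wm (S n)) with (Wm n ++ Wm n ++ [true] ++ Wm n).
  rewrite !V_app. rewrite V_true. simpl length. unfold Ln. rewrite Nat.add_1_l. lia.
Qed.

Lemma Xa_eq n : Wm (S n) ++ Wm (S n) ++ [true] =
  Wm n ++ Wm n ++ true :: Wm n ++ Wm n ++ Wm n ++ true :: Wm n ++ [true].
Proof. simpl. rewrite <- !app_assoc. reflexivity. Qed.

Lemma Xb_eq n : Wm (S n) ++ [true] ++ Wm (S n) =
  Wm n ++ Wm n ++ true :: Wm n ++ true :: Wm n ++ Wm n ++ true :: Wm n.
Proof. simpl. rewrite <- !app_assoc. reflexivity. Qed.

Lemma aS n s : a (S n) s = V (Wm n) (Wm n ++ Wm n ++ true :: Wm n ++ Wm n ++ Wm n ++ true :: Wm n ++ [true]) s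
  + V (Wm n) (Wm n ++ Wm n ++ true :: Wm n ++ Wm n ++ Wm n ++ true :: Wm n ++ [true]) (Ln n + s)
  + V (Wm n) (Wm n ++ Wm n ++ true :: Wm n ++ Wm n ++ Wm n ++ true :: Wm n ++ [true]) (S (Ln n + (Ln n + s))).
Proof. unfold a at 1. rewrite split_S, Xa_eq. reflexivity. Qed.

Lemma bS n s : b (S n) s = V (Wm n) (Wm n ++ Wm n ++ true :: Wm n ++ true :: Wm n ++ Wm n ++ true :: Wm n) s
  + V (Wm n) (Wm n ++ Wm n ++ true :: Wm n ++ true :: Wm n ++ Wm n ++ true :: Wm n) (Ln n + s)
  + V (Wm n) (Wm n ++ Wm n ++ true :: Wm n ++ true :: Wm n ++ Wm n ++ true :: Wm n) (S (Ln n + (Ln n + s))).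
Proof. unfold b at 1. rewrite split_S, Xb_eq. reflexivity. Qed.

Lemma F1 n s : s <= Ln n -> a (S n) s = 2 * a n s + b n s.
Proof.
  intros H. rewrite aS.
  assert (E1 : V (Wm n) (Wm n ++ Wm n ++ true :: Wm n ++ Wm n ++ Wm n ++ true :: Wm n ++ [true]) s = a n s) by redV.
  assert (E2 : V (Wm n) (Wm n ++ Wm n ++ true :: Wm n ++ Wm n ++ Wm n ++ true :: Wm n ++ [true]) (Ln n + s) = b n s) by redV.
  assert (E3 : V (Wm n) (Wm n ++ Wm n ++ true :: Wm n ++ Wm n ++ Wm n ++ true :: Wm n ++ [true]) (S (Ln n + (Ln n + s))) = a n s) by redV.
  lia.
Qed.

Lemma R_b1 n Z s : s <= 1 -> V (Wm n) (Wm n ++ true :: Z) s = b n s.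
Proof.
  intros H. unfold b.
  replace (Wm n ++ true :: Z) with ((Wm n ++ [true]) ++ Z) by (rewrite <- !app_assoc; reflexivity).
  replace (Wm n ++ [true] ++ Wm n) with ((Wm n ++ [true]) ++ Wm n) by (rewrite <- !app_assoc; reflexivity).
  rewrite (V_prefix _ (Wm n ++ [true]) Z), (V_prefix _ (Wm n ++ [true]) (Wm n)); try reflexivity;
  rewrite length_app; simpl; lia.
Qed.

Lemma R_bb_top' n Z k : k = Ln n + 1 -> V (Wm n) (Wm n ++ Wm n ++ Wm n ++ Z) k + 1 = a n (Ln n + 1).
Proof. intros ->. apply R_bb_top. Qed.

Lemma R_bend n s : V (Wm n) (Wm n ++ true :: Wm n) s = b n s.
Proof. reflexivity. Qed.

Ltac redW1 := first
  [ (rewrite R_a by lia; f_equal; lia)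
  | (rewrite R_b by lia; f_equal; lia)
  | (rewrite R_bb by lia; f_equal; lia)
  | (rewrite R_b1 by lia; f_equal; lia)
  | (rewrite R_bend; f_equal; lia)
  | (rewrite V_sB by lia)
  | (rewrite V_s1 by lia) ].
Ltac redW := repeat redW1.

Section Rec.
Variable n : nat.
Let Xa := Wm n ++ Wm n ++ true :: Wm n ++ Wm n ++ Wm n ++ true :: Wm n ++ [true].
Let Xb := Wm n ++ Wm n ++ true :: Wm n ++ true :: Wm n ++ Wm n ++ true :: Wm n.
Let L := Ln n.

Lemma F1top : a (S n) (L + 1) + 1 = 2 * a n (L + 1) + b n (L + 1).
Proof.
  pose proof (Ln_ge n) as HLge.
  rewrite aS. fold Xa. unfold L.
  assert (E1 : V (Wm n) Xa (Ln n + 1) = a n (Ln n + 1)) by (unfold Xa; redW).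
  assert (E2 : V (Wm n) Xa (Ln n + (Ln n + 1)) = b n (Ln n + 1)) by (unfold Xa; redW).
  assert (E3 : V (Wm n) Xa (S (Ln n + (Ln n + (Ln n + 1)))) + 1 = a n (Ln n + 1)).
  { unfold Xa. rewrite V_sB by lia. rewrite V_sB by lia. rewrite V_s1 by lia.
    apply R_bb_top'. lia. }
  lia.
Qed.

Lemma F1b s : s <= L + 1 -> b (S n) s = a n s + 2 * b n s.
Proof.
  pose proof (Ln_ge n) as HLge.
  intros H. rewrite bS. fold Xb. unfold L in *.
  assert (E1 : V (Wm n) Xb s = a n s) by (unfold Xb; redW).
  assert (E2 : V (Wm n) Xb (Ln n + s) = b n s) by (unfold Xb; redW).
  assert (E3 : V (Wm n) Xb (S (Ln n + (Ln n + s))) = b n s) by (unfold Xb; redW).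
  lia.
Qed.

Lemma F2 r : 2 <= r <= L + 1 -> a (S n) (L + r) = b n r + a n (r - 1) + a n r.
Proof.
  pose proof (Ln_ge n) as HLge.
  intros H. rewrite aS. fold Xa. unfold L in *.
  assert (E1 : V (Wm n) Xa (Ln n + r) = b n r) by (unfold Xa; redW).
  assert (E2 : V (Wm n) Xa (Ln n + (Ln n + r)) = a n (r - 1)) by (unfold Xa; redW).
  assert (E3 : V (Wm n) Xa (S (Ln n + (Ln n + (Ln n + r)))) = a n r) by (unfold Xa; redW).
  lia.
Qed.

Lemma F2b r : 2 <= r <= L + 1 -> b (S n) (L + r) = b n r + b n (r - 1) + a n (r - 1).
Proof.
  pose proof (Ln_ge n) as HLge.
  intros H. rewrite bS. fold Xb. unfold L in *.
  assert (E1 : V (Wm n) Xb (Ln n + r) = b n r) by (unfold Xb; redW).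
  assert (E2 : V (Wm n) Xb (Ln n + (Ln n + r)) = b n (r - 1)) by (unfold Xb; redW).
  assert (E3 : V (Wm n) Xb (S (Ln n + (Ln n + (Ln n + r)))) = a n (r - 1)) by (unfold Xb; redW).
  lia.
Qed.

Lemma F3 : a (S n) (L + L + 2) + 1 = a n 1 + a n (L + 1) + b n 2.
Proof.
  pose proof (Ln_ge n) as HLge.
  rewrite aS. fold Xa. unfold L in *.
  assert (E1 : V (Wm n) Xa (Ln n + Ln n + 2) = a n 1) by (unfold Xa; redW).
  assert (E2 : V (Wm n) Xa (Ln n + (Ln n + Ln n + 2)) + 1 = a n (Ln n + 1)).
  { unfold Xa. rewrite V_sB by lia. rewrite V_sB by lia. rewrite V_s1 by lia.
    apply R_bb_top'. lia. }
  assert (E3 : V (Wm n) Xa (S (Ln n + (Ln n + (Ln n + Ln n + 2)))) = b n 2) by (unfold Xa; redW).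
  lia.
Qed.

Lemma F3b : b (S n) (L + L + 2) = b n 1 + b n (L + 1) + a n (L + 1).
Proof.
  pose proof (Ln_ge n) as HLge.
  rewrite bS. fold Xb. unfold L in *.
  assert (E1 : V (Wm n) Xb (Ln n + Ln n + 2) = b n 1) by (unfold Xb; redW).
  assert (E2 : V (Wm n) Xb (Ln n + (Ln n + Ln n + 2)) = b n (Ln n + 1)) by (unfold Xb; redW).
  assert (E3 : V (Wm n) Xb (S (Ln n + (Ln n + (Ln n + Ln n + 2)))) = a n (Ln n + 1)) by (unfold Xb; redW).
  lia.
Qed.

Lemma F4 r : 3 <= r <= L + 1 -> a (S n) (L + L + r) = 2 * a n (r - 1) + b n r.
Proof.
  pose proof (Ln_ge n) as HLge.
  intros H. rewrite aS. fold Xa. unfold L in *.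
  assert (E1 : V (Wm n) Xa (Ln n + Ln n + r) = a n (r - 1)) by (unfold Xa; redW).
  assert (E2 : V (Wm n) Xa (Ln n + (Ln n + Ln n + r)) = a n (r - 1)) by (unfold Xa; redW).
  assert (E3 : V (Wm n) Xa (S (Ln n + (Ln n + (Ln n + Ln n + r)))) = b n r) by (unfold Xa; redW).
  lia.
Qed.

Lemma F4b r : 3 <= r <= L + 1 -> b (S n) (L + L + r) = 2 * b n (r - 1) + a n (r - 2).
Proof.
  pose proof (Ln_ge n) as HLge.
  intros H. rewrite bS. fold Xb. unfold L in *.
  assert (E1 : V (Wm n) Xb (Ln n + Ln n + r) = b n (r - 1)) by (unfold Xb; redW).
  assert (E2 : V (Wm n) Xb (Ln n + (Ln n + Ln n + r)) = a n (r - 2)) by (unfold Xb; redW).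
  assert (E3 : V (Wm n) Xb (S (Ln n + (Ln n + (Ln n + Ln n + r)))) = b n (r - 1)) by (unfold Xb; redW).
  lia.
Qed.

Lemma F5 : a (S n) (L + L + L + 2) + 1 = 2 * a n (L + 1) + b n 1.
Proof.
  pose proof (Ln_ge n) as HLge.
  rewrite aS. fold Xa. unfold L in *.
  assert (E1 : V (Wm n) Xa (Ln n + Ln n + Ln n + 2) + 1 = a n (Ln n + 1)).
  { unfold Xa. rewrite V_sB by lia. rewrite V_sB by lia. rewrite V_s1 by lia.
    apply R_bb_top'. lia. }
  assert (E2 : V (Wm n) Xa (Ln n + (Ln n + Ln n + Ln n + 2)) = a n (Ln n + 1)) by (unfold Xa; redW).
  assert (E3 : V (Wm n) Xa (S (Ln n + (Ln n + (Ln n + Ln n + Ln n + 2)))) = b n 1) by (unfold Xa; redW).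
  lia.
Qed.

Lemma F5b : b (S n) (L + L + L + 2) = 2 * b n (L + 1) + a n L.
Proof.
  pose proof (Ln_ge n) as HLge.
  rewrite bS. fold Xb. unfold L in *.
  assert (E1 : V (Wm n) Xb (Ln n + Ln n + Ln n + 2) = b n (Ln n + 1)) by (unfold Xb; redW).
  assert (E2 : V (Wm n) Xb (Ln n + (Ln n + Ln n + Ln n + 2)) = a n (Ln n)) by (unfold Xb; redW).
  assert (E3 : V (Wm n) Xb (S (Ln n + (Ln n + (Ln n + Ln n + Ln n + 2)))) = b n (Ln n + 1)) by (unfold Xb; redW).
  lia.
Qed.
End Rec.


Record Inv (k : nat) : Prop := {
  e_a1 : a (S k) 1 = Ln k;
  e_b1 : b (S k) 1 = Ln k + 1;
  e_a2 : a (S k) 2 = 3 ^ k;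
  e_b2 : b (S k) 2 = 3 ^ k;
  e_aLm : a (S k) (Ln (S k) - 1) = Ln k;
  e_aL : a (S k) (Ln (S k)) = 0;
  e_bL : b (S k) (Ln (S k)) = Ln k + 1;
  e_aL1 : a (S k) (Ln (S k) + 1) = Ln k + 1;
  e_bL1 : b (S k) (Ln (S k) + 1) = 0;
  p0 : forall r, 1 <= r <= Ln (S k) -> 3 ^ k + 1 <= a (S k) r + b (S k) r;
  p1 : forall r, 2 <= r <= Ln (S k) -> 3 ^ k + 1 <= a (S k) (r - 1) + b (S k) r;
  p2 : forall r, 3 <= r <= Ln (S k) -> 3 ^ k + 1 <= a (S k) (r - 2) + b (S k) r }.

Lemma Inv0 : Inv 0.
Proof.
  constructor; try (vm_compute; reflexivity);
  intros r Hr; change (Ln 1) with 4 in Hr;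
  assert (r = 1 \/ r = 2 \/ r = 3 \/ r = 4) as HH by lia;
  destruct HH as [-> | [-> | [-> | ->]]]; try lia; vm_compute; lia.
Qed.

Ltac fixargs k :=
  try replace (Ln (S k) + 1 - 1) with (Ln (S k)) by lia;
  try replace (Ln (S k) + 1 - 2) with (Ln (S k) - 1) by lia;
  try replace (Ln (S k) - 1 + 1) with (Ln (S k)) by lia.

Lemma step k : Inv k -> Inv (S k).
Proof.
  intros I.
  pose proof (Ln_S (S k)) as HL'.
  pose proof (Ln_S k) as HL.
  pose proof (Ln_pow k) as Ht.
  pose proof (Ln_ge k) as Hk.
  change (3 ^ S k) with (3 * 3 ^ k) in *.
  destruct I as [a1 b1 a2 b2 aLm aL bL aL1 bL1 P0 P1 P2].
  constructor; try change (3 ^ S k) with (3 * 3 ^ k).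
  - rewrite (F1 (S k)) by lia. lia.
  - rewrite (F1b (S k)) by lia. lia.
  - rewrite (F1 (S k)) by lia. lia.
  - rewrite (F1b (S k)) by lia. lia.
  - replace (Ln (S (S k)) - 1) with (Ln (S k) + Ln (S k) + Ln (S k)) by lia.
    rewrite (F4 (S k)) by lia. fixargs k. lia.
  - replace (Ln (S (S k))) with (Ln (S k) + Ln (S k) + (Ln (S k) + 1)) by lia.
    rewrite (F4 (S k)) by lia. fixargs k. lia.
  - replace (Ln (S (S k))) with (Ln (S k) + Ln (S k) + (Ln (S k) + 1)) by lia.
    rewrite (F4b (S k)) by lia. fixargs k. lia.
  - replace (Ln (S (S k)) + 1) with (Ln (S k) + Ln (S k) + Ln (S k) + 2) by lia.
    pose proof (F5 (S k)). lia.
  - replace (Ln (S (S k)) + 1) with (Ln (S k) + Ln (S k) + Ln (S k) + 2) by lia.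
    rewrite (F5b (S k)). lia.
  -
    intros x Hx.
    destruct (le_lt_dec x (Ln (S k))) as [h|h].
    { rewrite (F1 (S k)), (F1b (S k)) by lia. pose proof (P0 x ltac:(lia)). lia. }
    destruct (Nat.eq_dec x (Ln (S k) + 1)) as [->|h2].
    { pose proof (F1top (S k)). rewrite (F1b (S k)) by lia. lia. }
    destruct (le_lt_dec x (Ln (S k) + Ln (S k) + 1)) as [h3|h3].
    { replace x with (Ln (S k) + (x - Ln (S k))) by lia.
      remember (x - Ln (S k)) as r.
      rewrite (F2 (S k)), (F2b (S k)) by lia.
      destruct (Nat.eq_dec r (Ln (S k) + 1)) as [->|h4].
      - fixargs k. lia.
      - pose proof (P0 r ltac:(lia)). pose proof (P0 (r - 1) ltac:(lia)).
        pose proof (P1 r ltac:(lia)). lia. }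
    destruct (Nat.eq_dec x (Ln (S k) + Ln (S k) + 2)) as [->|h4].
    { pose proof (F3 (S k)). pose proof (F3b (S k)). lia. }
    replace x with (Ln (S k) + Ln (S k) + (x - Ln (S k) - Ln (S k))) by lia.
    remember (x - Ln (S k) - Ln (S k)) as r.
    rewrite (F4 (S k)), (F4b (S k)) by lia.
    destruct (Nat.eq_dec r (Ln (S k) + 1)) as [->|h5].
    + fixargs k. lia.
    + pose proof (P0 (r - 1) ltac:(lia)). pose proof (P2 r ltac:(lia)). lia.
  -
    intros x Hx.
    destruct (le_lt_dec x (Ln (S k))) as [h|h].
    { rewrite (F1 (S k)), (F1b (S k)) by lia. pose proof (P0 x ltac:(lia)). pose proof (P0 (x-1) ltac:(lia)).
      pose proof (P1 x ltac:(lia)). lia. }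
    destruct (Nat.eq_dec x (Ln (S k) + 1)) as [->|h2].
    { fixargs k. rewrite (F1 (S k)), (F1b (S k)) by lia. lia. }
    destruct (Nat.eq_dec x (Ln (S k) + 2)) as [->|h2'].
    { replace (Ln (S k) + 2 - 1) with (Ln (S k) + 1) by lia.
      pose proof (F1top (S k)). rewrite (F2b (S k)) by lia. simpl (2 - 1). lia. }
    destruct (le_lt_dec x (Ln (S k) + Ln (S k) + 1)) as [h3|h3].
    { replace x with (Ln (S k) + (x - Ln (S k))) by lia.
      remember (x - Ln (S k)) as r.
      replace (Ln (S k) + r - 1) with (Ln (S k) + (r - 1)) by lia.
      rewrite (F2 (S k)), (F2b (S k)) by lia.
      replace (r - 1 - 1) with (r - 2) by lia.
      destruct (Nat.eq_dec r (Ln (S k) + 1)) as [->|h4].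
      - fixargs k. pose proof (P0 (Ln (S k)) ltac:(lia)). lia.
      - pose proof (P1 (r - 1) ltac:(lia)). pose proof (P0 (r - 1) ltac:(lia)).
        pose proof (P1 r ltac:(lia)). replace (r - 1 - 1) with (r - 2) in * by lia. lia. }
    destruct (Nat.eq_dec x (Ln (S k) + Ln (S k) + 2)) as [->|h4].
    { replace (Ln (S k) + Ln (S k) + 2 - 1) with (Ln (S k) + (Ln (S k) + 1)) by lia.
      rewrite (F2 (S k)) by lia. pose proof (F3b (S k)). fixargs k. lia. }
    destruct (Nat.eq_dec x (Ln (S k) + Ln (S k) + 3)) as [->|h5].
    { replace (Ln (S k) + Ln (S k) + 3 - 1) with (Ln (S k) + Ln (S k) + 2) by lia.
      pose proof (F3 (S k)). rewrite (F4b (S k)) by lia. simpl (3 - 1). simpl (3 - 2). lia. }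
    replace x with (Ln (S k) + Ln (S k) + (x - Ln (S k) - Ln (S k))) by lia.
    remember (x - Ln (S k) - Ln (S k)) as r.
    replace (Ln (S k) + Ln (S k) + r - 1) with (Ln (S k) + Ln (S k) + (r - 1)) by lia.
    rewrite (F4 (S k)), (F4b (S k)) by lia.
    replace (r - 1 - 1) with (r - 2) by lia.
    pose proof (P1 (r - 1) ltac:(lia)). replace (r - 1 - 1) with (r - 2) in * by lia. lia.
  -
    intros x Hx.
    destruct (le_lt_dec x (Ln (S k))) as [h|h].
    { rewrite (F1 (S k)), (F1b (S k)) by lia. pose proof (P0 x ltac:(lia)). pose proof (P0 (x-2) ltac:(lia)).
      pose proof (P2 x ltac:(lia)). lia. }
    destruct (Nat.eq_dec x (Ln (S k) + 1)) as [->|h2].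
    { replace (Ln (S k) + 1 - 2) with (Ln (S k) - 1) by lia.
      rewrite (F1 (S k)), (F1b (S k)) by lia. pose proof (P0 (Ln (S k) - 1) ltac:(lia)). lia. }
    destruct (Nat.eq_dec x (Ln (S k) + 2)) as [->|h2'].
    { replace (Ln (S k) + 2 - 2) with (Ln (S k)) by lia.
      rewrite (F1 (S k)) by lia. rewrite (F2b (S k)) by lia. simpl (2 - 1). lia. }
    destruct (Nat.eq_dec x (Ln (S k) + 3)) as [->|h2''].
    { replace (Ln (S k) + 3 - 2) with (Ln (S k) + 1) by lia.
      pose proof (F1top (S k)). rewrite (F2b (S k)) by lia. simpl (3 - 1). lia. }
    destruct (le_lt_dec x (Ln (S k) + Ln (S k) + 1)) as [h3|h3].
    { replace x with (Ln (S k) + (x - Ln (S k))) by lia.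
      remember (x - Ln (S k)) as r.
      replace (Ln (S k) + r - 2) with (Ln (S k) + (r - 2)) by lia.
      rewrite (F2 (S k)), (F2b (S k)) by lia.
      replace (r - 2 - 1) with (r - 3) by lia.
      destruct (Nat.eq_dec r (Ln (S k) + 1)) as [->|h4].
      - fixargs k. pose proof (P1 (Ln (S k) - 1) ltac:(lia)).
        replace (Ln (S k) - 1 - 1) with (Ln (S k) - 2) in * by lia.
        replace (Ln (S k) + 1 - 3) with (Ln (S k) - 2) by lia. lia.
      - pose proof (P1 (r - 2) ltac:(lia)). pose proof (P1 (r - 1) ltac:(lia)).
        pose proof (P1 r ltac:(lia)).
        replace (r - 2 - 1) with (r - 3) in * by lia. replace (r - 1 - 1) with (r - 2) in * by lia. lia. }
    destruct (Nat.eq_dec x (Ln (S k) + Ln (S k) + 2)) as [->|h4].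
    { replace (Ln (S k) + Ln (S k) + 2 - 2) with (Ln (S k) + Ln (S k)) by lia.
      rewrite (F2 (S k)) by lia. pose proof (F3b (S k)). fixargs k. lia. }
    destruct (Nat.eq_dec x (Ln (S k) + Ln (S k) + 3)) as [->|h5].
    { replace (Ln (S k) + Ln (S k) + 3 - 2) with (Ln (S k) + (Ln (S k) + 1)) by lia.
      rewrite (F2 (S k)) by lia. rewrite (F4b (S k)) by lia. fixargs k. simpl (3 - 1). simpl (3 - 2). lia. }
    destruct (Nat.eq_dec x (Ln (S k) + Ln (S k) + 4)) as [->|h6].
    { replace (Ln (S k) + Ln (S k) + 4 - 2) with (Ln (S k) + Ln (S k) + 2) by lia.
      pose proof (F3 (S k)). rewrite (F4b (S k)) by lia. simpl (4 - 1). simpl (4 - 2). lia. }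
    replace x with (Ln (S k) + Ln (S k) + (x - Ln (S k) - Ln (S k))) by lia.
    remember (x - Ln (S k) - Ln (S k)) as r.
    replace (Ln (S k) + Ln (S k) + r - 2) with (Ln (S k) + Ln (S k) + (r - 2)) by lia.
    rewrite (F4 (S k)), (F4b (S k)) by lia.
    replace (r - 2 - 1) with (r - 3) by lia.
    pose proof (P1 (r - 2) ltac:(lia)). pose proof (P2 (r - 1) ltac:(lia)).
    pose proof (P1 (r - 1) ltac:(lia)).
    replace (r - 2 - 1) with (r - 3) in * by lia. replace (r - 1 - 2) with (r - 3) in * by lia.
    replace (r - 1 - 1) with (r - 2) in * by lia. lia.
Qed.

Lemma Inv_all k : Inv k.
Proof. induction k; [exact Inv0 | apply step; exact IHk]. Qed.


Definition Vf (B : list bool) (f : nat -> bool) : nat :=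
  cntp (fun y => negb (nth y B false) && f y) (length B).

Lemma Vf_app B1 B2 f : Vf (B1 ++ B2) f = Vf B1 f + Vf B2 (fun k => f (length B1 + k)).
Proof.
  unfold Vf. rewrite length_app, cntp_add. f_equal.
  - apply cntp_ext. intros k Hk. rewrite app_nth1 by lia. reflexivity.
  - apply cntp_ext. intros k Hk. rewrite app_nth2_plus. reflexivity.
Qed.

Lemma Vf_ext B f g : (forall y, y < length B -> f y = g y) -> Vf B f = Vf B g.
Proof. intros H. unfold Vf. apply cntp_ext. intros k Hk. rewrite H by lia. reflexivity. Qed.

Lemma zo_eq w i n : zero_one w i n = Vf (Wm n) (fun k => w (i + k)).
Proof. reflexivity. Qed.

Lemma V_Vf B Y s : V B Y s = Vf B (fun y => nth (y + s) Y false).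
Proof. reflexivity. Qed.

Lemma WS n : Wm (S n) = Wm n ++ Wm n ++ [true] ++ Wm n.
Proof. reflexivity. Qed.

Section W.
Variable w : nat -> bool.
Hypothesis Hw : is_W w.

Lemma w_nth m k : k < Ln m -> w k = nth k (Wm m) false.
Proof. intros H. apply Hw. exact H. Qed.

Lemma w_per n j : j < Ln n -> w (Ln n + j) = w j.
Proof.
  intros H. pose proof (Ln_S n).
  rewrite (w_nth (S n)) by lia. rewrite (w_nth n) by lia.
  rewrite WS. unfold Ln. rewrite app_nth2_plus.
  rewrite app_nth1 by (unfold Ln in H; lia). reflexivity.
Qed.

Lemma zo_rec i n : i <= Ln n -> zero_one w i (S n) = zero_one w i n + a n i + b n i.
Proof.
  intros Hi. pose proof (Ln_S n) as HL. pose proof (Ln_S (S n)) as HL2.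
  rewrite !zo_eq. rewrite WS. rewrite !Vf_app.
  change (Vf [true] _) with 0. simpl length.
  assert (E2 : Vf (Wm n) (fun k => w (i + (length (Wm n) + k))) = b n i).
  { unfold b. rewrite V_Vf. apply Vf_ext. intros y Hy.
    rewrite (w_nth (S n)) by (unfold Ln in *; lia).
    rewrite WS. replace (i + (length (Wm n) + y)) with (length (Wm n) + (y + i)) by lia.
    rewrite app_nth2_plus. reflexivity. }
  assert (E3 : Vf (Wm n) (fun k => w (i + (length (Wm n) + (length (Wm n) + (1 + k))))) = a n i).
  { unfold a. rewrite V_Vf. apply Vf_ext. intros y Hy.
    rewrite (w_nth (S (S n))) by (unfold Ln in *; lia).
    rewrite (WS (S n)). rewrite (WS n).
    unfold Ln in Hi. set (W := Wm n) in *. set (LW := length W) in *.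
    destruct (le_lt_dec LW (y + i)) as [h|h].
    - assert (HA : nth (i + (LW + (LW + (1 + y)))) ((W ++ W ++ [true] ++ W) ++ (W ++ W ++ [true] ++ W) ++ [true] ++ (W ++ W ++ [true] ++ W)) false = nth (y + i - LW) W false).
      { replace (i + (LW + (LW + (1 + y)))) with (length (W ++ W ++ [true] ++ W) + (y + i - LW))
          by (rewrite !length_app; simpl; unfold LW; lia).
        rewrite app_nth2_plus. rewrite <- app_assoc.
        apply app_nth1. unfold LW in *; lia. }
      assert (HB : nth (y + i) (W ++ W ++ [true]) false = nth (y + i - LW) W false).
      { unfold LW in *. rewrite app_nth2 by lia.
        apply app_nth1. lia. }
      rewrite HA, HB. reflexivity.
    - assert (HA : nth (i + (LW + (LW + (1 + y)))) ((W ++ W ++ [true] ++ W) ++ (W ++ W ++ [true] ++ W) ++ [true] ++ (W ++ W ++ [true] ++ W)) false = nth (y + i) W false).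
      { rewrite app_nth1 by (rewrite !length_app; simpl; unfold LW in *; lia).
        replace (i + (LW + (LW + (1 + y)))) with (LW + (LW + (1 + (y + i)))) by lia.
        unfold LW. rewrite app_nth2_plus. rewrite app_nth2_plus.
        change ([true] ++ W) with (true :: W). reflexivity. }
      assert (HB : nth (y + i) (W ++ W ++ [true]) false = nth (y + i) W false).
      { apply app_nth1. unfold LW in *; lia. }
      rewrite HA, HB. reflexivity. }
  cbv beta. rewrite E2, E3. unfold zero_one. lia.
Qed.

Lemma mism_split (x y : nat -> bool) L :
  cntp (fun k => negb (Bool.eqb (x k) (y k))) L =
  cntp (fun k => negb (x k) && y k) L + cntp (fun k => x k && negb (y k)) L.
Proof.
  induction L; [reflexivity|]. rewrite !cntp_S, IHL.
  destruct (x L), (y L); simpl; lia.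
Qed.

Lemma ones_bal (x y : nat -> bool) L :
  cntp (fun k => negb (x k) && y k) L + cntp x L =
  cntp (fun k => x k && negb (y k)) L + cntp y L.
Proof.
  induction L; [reflexivity|]. rewrite !cntp_S.
  destruct (x L), (y L); simpl; lia.
Qed.

Lemma mism_eq i n : i <= Ln n -> mismatches w i n = 2 * zero_one w i n.
Proof.
  intros Hi. unfold mismatches, zero_one. fold (Ln n).
  change (length (filter ?p (seq 0 ?m))) with (cntp p m).
  rewrite (mism_split (fun k => nth k (Wm n) false) (fun k => w (i + k))).
  pose proof (ones_bal (fun k => nth k (Wm n) false) (fun k => w (i + k)) (Ln n)) as HB.
  assert (E1 : cntp (fun k => nth k (Wm n) false) (Ln n) = cntp w (Ln n)).
  { apply cntp_ext. intros k Hk. symmetry. apply w_nth. exact Hk. }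
  assert (E2 : cntp (fun k => w (i + k)) (Ln n) = cntp w (Ln n)).
  { pose proof (cntp_add w i (Ln n)) as A1. pose proof (cntp_add w (Ln n) i) as A2.
    replace (Ln n + i) with (i + Ln n) in A2 by lia.
    assert (A3 : cntp (fun k => w (Ln n + k)) i = cntp w i).
    { apply cntp_ext. intros k Hk. apply w_per. lia. }
    lia. }
  lia.
Qed.

Lemma Sgrow i k : i <= Ln i -> a (i + k) i + b (i + k) i = 3 ^ k * (a i i + b i i).
Proof.
  intros Hi. induction k.
  - rewrite Nat.add_0_r. simpl. lia.
  - replace (i + S k) with (S (i + k)) by lia.
    assert (i <= Ln (i + k)).
    { pose proof (Ln_ge (i + k)). lia. }
    rewrite F1, F1b by lia. change (3 ^ S k) with (3 * 3 ^ k). lia.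
Qed.

Lemma zo_form i k : 2 * zero_one w i (i + k) + (a i i + b i i) =
  2 * zero_one w i i + 3 ^ k * (a i i + b i i).
Proof.
  pose proof (Ln_ge i) as Hi.
  induction k.
  - rewrite Nat.add_0_r. simpl. lia.
  - replace (i + S k) with (S (i + k)) by lia.
    assert (i <= Ln (i + k)) by (pose proof (Ln_ge (i + k)); lia).
    rewrite zo_rec by lia. pose proof (Sgrow i k ltac:(lia)).
    change (3 ^ S k) with (3 * 3 ^ k). lia.
Qed.

End W.

Lemma zeros_eq n : zeros n = 3 ^ n.
Proof.
  assert (Z : forall m, zeros m = Vf (Wm m) (fun _ => true)).
  { intros m. unfold zeros, Vf. change (length (filter ?p (seq 0 ?m))) with (cntp p m).
    apply cntp_ext. intros k Hk. rewrite andb_true_r. reflexivity. }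
  induction n.
  - reflexivity.
  - rewrite Z in *. rewrite WS, !Vf_app. change (Vf [true] _) with 0.
    change (3 ^ S n) with (3 * 3 ^ n). rewrite <- IHn. lia.
Qed.

Lemma S_pos i : 1 <= i -> 3 ^ i < 3 * (a i i + b i i).
Proof.
  intros Hi. destruct i as [|j]; [lia|].
  pose proof (p0 _ (Inv_all j) (S j)) as H.
  pose proof (Ln_ge (S j)).
  change (3 ^ S j) with (3 * 3 ^ j). specialize (H ltac:(lia)). lia.
Qed.

End Comb.
Import Comb.


Lemma INR3pow n : INR (3 ^ n) = 3 ^ n.
Proof. rewrite pow_INR. simpl. f_equal. lra. Qed.

Theorem proposition1 (w : nat -> bool) (Hw : is_W w) (i : nat) (hi : (0 < i)%nat) :
  (exists L0 : R, Un_cv (d0_n w i) L0 /\ L0 > 1 / 6) /\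
  (exists L : R, Un_cv (d_n w i) L /\ L > 2 / 9).
Proof.
  assert (Hpos : (3 ^ i < 3 * (a i i + b i i))%nat) by (apply S_pos; lia).
  assert (Hzn : forall k, (2 * zero_one w i (k + i) + (a i i + b i i) =
                 2 * zero_one w i i + 3 ^ k * (a i i + b i i))%nat).
  { intros k. replace (k + i)%nat with (i + k)%nat by lia. apply zo_form. exact Hw. }
  remember (a i i + b i i)%nat as S0 eqn:HS0.
  remember (zero_one w i i) as Z0 eqn:HZ0.
  assert (HposR : 3 ^ i < 3 * INR S0).
  { rewrite <- INR3pow. replace (3 * INR S0) with (INR (3 * S0)) by (rewrite mult_INR; simpl; lra).
    apply lt_INR. exact Hpos. }
  assert (HY : 0 < 3 ^ i) by (apply pow_lt; lra).
  assert (Hzo : forall k, 2 * INR (zero_one w i (k + i)) = 2 * INR Z0 + 3 ^ k * INR S0 - INR S0).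
  { intros k. pose proof (Hzn k) as H.
    apply (f_equal INR) in H. rewrite !plus_INR, !mult_INR, INR3pow in H.
    simpl (INR 2) in H. lra. }
  split.
  - exists (INR S0 / (2 * 3 ^ i)). split.
    + apply is_lim_seq_Reals. apply (is_lim_seq_incr_n _ i).
      apply (is_lim_seq_ext (fun k => (2 * INR Z0 - INR S0) / (2 * 3 ^ i) * (/ 3) ^ k + INR S0 / (2 * 3 ^ i))).
      { intros k. unfold d0_n. rewrite zeros_eq, INR3pow, pow_add, pow_inv.
        assert (HX : 0 < 3 ^ k) by (apply pow_lt; lra).
        pose proof (Hzo k).
        replace (INR (zero_one w i (k + i))) with ((2 * INR Z0 + 3 ^ k * INR S0 - INR S0) / 2) by lra.
        field. split; lra. }
      assert (HH : is_lim_seq (fun k => (2 * INR Z0 - INR S0) / (2 * 3 ^ i) * (/ 3) ^ k + INR S0 / (2 * 3 ^ i))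
                    ((2 * INR Z0 - INR S0) / (2 * 3 ^ i) * 0 + INR S0 / (2 * 3 ^ i))).
      { apply is_lim_seq_plus'; [|apply is_lim_seq_const].
        apply is_lim_seq_mult'; [apply is_lim_seq_const|].
        apply is_lim_seq_geom. rewrite Rabs_pos_eq by lra. lra. }
      rewrite Rmult_0_r, Rplus_0_l in HH. exact HH.
    + apply Rlt_gt. apply (Rmult_lt_reg_r (6 * (2 * 3 ^ i))); [lra|].
      field_simplify; lra.
  - exists (2 * INR S0 / (3 * 3 ^ i)). split.
    + apply is_lim_seq_Reals. apply (is_lim_seq_incr_n _ i).
      apply (is_lim_seq_ext (fun k => (2 * ((2 * INR Z0 - INR S0) * (/ 3) ^ k + INR S0)) / (3 * 3 ^ i - (/ 3) ^ k))).
      { intros k. unfold d_n.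
        assert (HX : 1 <= 3 ^ k) by (apply pow_R1_Rle; lra).
        assert (HY1 : 1 <= 3 ^ i) by (apply pow_R1_Rle; lra).
        rewrite (mism_eq w Hw) by (pose proof (Ln_ge (k + i)); lia).
        rewrite mult_INR. simpl (INR 2).
        pose proof (Ln_pow (k + i)) as HL. apply (f_equal INR) in HL.
        rewrite plus_INR, mult_INR, INR3pow in HL. simpl (INR 2) in HL. simpl (INR 1) in HL.
        unfold Ln in HL.
        replace (INR (length (Wm (k + i)))) with ((3 ^ S (k + i) - 1) / 2) by lra.
        rewrite Hzo. rewrite pow_inv. simpl (3 ^ S (k + i)). rewrite pow_add.
        assert (HXi : 0 < / 3 ^ k) by (apply Rinv_0_lt_compat; lra).
        assert (H3 : 3 * 3 ^ i - / 3 ^ k <> 0).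
        { assert (/ 3 ^ k <= 1). { rewrite <- Rinv_1. apply Rinv_le_contravar; lra. } lra. }
        assert (H4 : 3 * (3 ^ k * 3 ^ i) - 1 <> 0) by nra.
        field. repeat split; lra. }
      assert (HH : is_lim_seq (fun k => (2 * ((2 * INR Z0 - INR S0) * (/ 3) ^ k + INR S0)) / (3 * 3 ^ i - (/ 3) ^ k))
                  ((2 * ((2 * INR Z0 - INR S0) * 0 + INR S0)) / (3 * 3 ^ i - 0))).
      2:{ replace ((2 * ((2 * INR Z0 - INR S0) * 0 + INR S0)) / (3 * 3 ^ i - 0)) with (2 * INR S0 / (3 * 3 ^ i)) in HH
            by (field; lra). exact HH. }
      apply is_lim_seq_div'; [| |lra].
      * apply is_lim_seq_mult'; [apply is_lim_seq_const|].
        apply is_lim_seq_plus'; [|apply is_lim_seq_const].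
        apply is_lim_seq_mult'; [apply is_lim_seq_const|].
        apply is_lim_seq_geom. rewrite Rabs_pos_eq by lra. lra.
      * apply is_lim_seq_minus'; [apply is_lim_seq_const|].
        apply is_lim_seq_geom. rewrite Rabs_pos_eq by lra. lra.
    + apply Rlt_gt. apply (Rmult_lt_reg_r (9 * (3 * 3 ^ i))); [lra|].
      field_simplify; lra.
Qed.
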